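(* Let $\mu$ be a partition of $n+k$ with $h$ rows and $l=\mu_1$ columns, and let $(i,j)$ be a cell of $\mu$. Let $\alpha_0,\dots,\alpha_{h-1}$ be distinct rational numbers and $\beta_0,\dots,\beta_{l-1}$ be distinct rational numbers. Let $\mathcal{T}$ be the set of fillings of the Ferrers diagram of $\mu$ in which $k$ cells of $S_\mu(i,j)$ are left white and the other $n$ cells contain the numbers $1,\dots,n$, each exactly once. To $T\in\mathcal{T}$ associate the point $(a(T),b(T))\in\mathbb{Q}^{2n}$ with $a_t(T)=\alpha_{r_t}$ and $b_t(T)=\beta_{c_t}$, where $(r_t,c_t)$ is the cell (row, column) containing $t$. Let $\rho^k$ be the set of these points, and $J_{\rho^k}\subseteq\mathbb{Q}[X_n,Y_n]$ the ideal of polynomials vanishing on $\rho^k$. Let $I^k=\mathrm{gr}\,J_{\rho^k}$ be the ideal generated by the highest-degree homogeneous components of elements of $J_{\rho^k}$. Then $$I^k\subseteq \bigcap_{(a_1,b_1),\dots,(a_k,b_k)} I_{\partial x_{n+1}^{a_1}\partial y_{n+1}^{b_1}\cdots\partial x_{n+k}^{a_k}\partial y_{n+k}^{b_k}\Delta_\mu}\ \cap\ \mathbb{Q}[X_n,Y_n],$$ where the intersection runs over all $k$-tuples of distinct cells of $S_\mu(i,j)$ in increasing order, and $\Delta_\mu=\Delta_\mu(X_{n+k},Y_{n+k})$.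
   Context: Write $X_m=(x_1,\dots,x_m)$ and $Y_m=(y_1,\dots,y_m)$. The Ferrers diagram of $\mu$ is $\{(a,b):0\le a\le h-1,\ 0\le b\le\mu_{a+1}-1\}$ ($a$ = row, $b$ = column). Cells are ordered by $(p,q)<(p',q')$ iff $q<q'$, or $q=q'$ and $p<p'$. For a lattice diagram with cells $(p_1,q_1)<\dots<(p_m,q_m)$, set $\Delta_L=\det(x_r^{p_t}y_r^{q_t})_{1\le r,t\le m}$. The shadow is $S_\mu(i,j)=\{(a,b)\in\mu:a\ge i,\ b\ge j\}$. For $R\in\mathbb{Q}[X_{n+k},Y_{n+k}]$, $I_R$ is the set of $P$ such that $P(\partial)Q=0$ for all partial derivatives $Q$ of $R$, where $P(\partial)$ substitutes $\partial/\partial x_r$ and $\partial/\partial y_r$ for $x_r$ and $y_r$. *)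

(* Defs.v *)
From mathcomp Require Import all_boot all_order all_algebra.
From mathcomp Require Import mpoly.
Unset Printing Implicit Defensive.
Import GRing.Theory.
Local Open Scope ring_scope.

(* Conventions.  N = n + k.  The ring Q[X_N, Y_N] is {mpoly rat[N + N]}:
   variable of index r < N is x_{r+1}, variable of index N + r is y_{r+1}. *)

Definition is_partition (mu : seq nat) : bool :=
  sorted geq mu && all (fun x => 0 < x)%N mu.

(* cell (a,b) = (row, column), 0-indexed, of the Ferrers diagram *)
Definition cell_in (mu : seq nat) (c : nat * nat) : bool :=
  (c.1 < size mu)%N && (c.2 < nth 0%N mu c.1)%N.

Definition cell_lt (c d : nat * nat) : bool :=
  (c.2 < d.2)%N || ((c.2 == d.2) && (c.1 < d.1)%N).

Definition cells (mu : seq nat) : seq (nat * nat) :=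
  filter (cell_in mu)
    [seq (a, b) | b <- iota 0 (head 0%N mu), a <- iota 0 (size mu)].

Definition shadow (mu : seq nat) (i j : nat) (c : nat * nat) : bool :=
  [&& cell_in mu c, (i <= c.1)%N & (j <= c.2)%N].

Definition Delta (N : nat) (mu : seq nat) : {mpoly rat[N + N]} :=
  \det (\matrix_(r < N, t < N)
          ('X_(lshift N r) ^+ (nth (0%N, 0%N) (cells mu) t).1 *
           'X_(rshift N r) ^+ (nth (0%N, 0%N) (cells mu) t).2)).

(* the monomial  x_{n+1}^{a_1} y_{n+1}^{b_1} ... x_{n+k}^{a_k} y_{n+k}^{b_k},
   where d s = (a_{s+1}, b_{s+1}) *)
Definition dmon (n k : nat) (d : 'I_k -> nat * nat) : 'X_{1..(n + k) + (n + k)} :=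
  [multinom (if (i < n + k)%N then
               (if n <= i then (odflt (0, 0) (omap d (insub (i - n)))).1 else 0)%N
             else
               (if n <= i - (n + k) then
                  (odflt (0, 0) (omap d (insub (i - (n + k) - n)))).2 else 0)%N)
            | i < (n + k) + (n + k)].

Definition diffop {M : nat} (P Q : {mpoly rat[M]}) : {mpoly rat[M]} :=
  \sum_(m <- msupp P) P@_m *: mderivm m Q.

Definition in_IR {M : nat} (R P : {mpoly rat[M]}) : Prop :=
  forall m : 'X_{1..M}, diffop P (mderivm m R) = 0.

(* P belongs to the subring Q[X_n, Y_n] of Q[X_N, Y_N] *)
Definition small (n : nat) {N : nat} (P : {mpoly rat[N + N]}) : Prop :=
  forall m, m \in msupp P -> forall i : 'I_(N + N), m i != 0%N ->
    if (i < N)%N then (i < n)%N else (i - N < n)%N.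

(* fillings: f t = cell containing the label t+1 (t < n); W = white cells *)
Definition is_filling (n k : nat) (mu : seq nat) (i j : nat)
    (f : nat -> nat * nat) : Prop :=
  exists W : seq (nat * nat),
    [/\ [/\ uniq W, size W = k & all (shadow mu i j) W],
        (forall t, (t < n)%N -> cell_in mu (f t) /\ f t \notin W),
        (forall t u, (t < n)%N -> (u < n)%N -> f t = f u -> t = u) &
        (forall c, cell_in mu c -> c \notin W -> exists2 t, (t < n)%N & f t = c)].

(* the point (a(T), b(T)) (other coordinates set to 0; irrelevant on Q[X_n,Y_n]) *)
Definition fpoint (n : nat) {N : nat} (alpha beta : nat -> rat) (f : nat -> nat * nat)
    (i : 'I_(N + N)) : rat :=
  if (i < N)%N then (if (i < n)%N then alpha (f i).1 else 0)
  else (if (i - N < n)%N then beta (f (i - N)%N).2 else 0).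

Definition in_J (n k : nat) (mu : seq nat) (i j : nat) (alpha beta : nat -> rat)
    (P : {mpoly rat[(n + k) + (n + k)]}) : Prop :=
  small n P /\
  forall f, is_filling n k mu i j f -> P.@[fpoint n alpha beta f] = 0.

Definition topcomp {M : nat} (g : {mpoly rat[M]}) : {mpoly rat[M]} :=
  \sum_(m <- msupp g | mdeg m == (msize g).-1) g@_m *: 'X_[m].

Definition in_Ik (n k : nat) (mu : seq nat) (i j : nat) (alpha beta : nat -> rat)
    (P : {mpoly rat[(n + k) + (n + k)]}) : Prop :=
  exists (p : nat) (c g : 'I_p -> {mpoly rat[(n + k) + (n + k)]}),
    [/\ forall s, small n (c s),
        forall s, in_J n k mu i j alpha beta (g s) &
        P = \sum_(s < p) c s * topcomp (g s)].

(* Main.v *)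
Require Import Defs.
From mathcomp Require Import all_boot all_order all_algebra.
From mathcomp Require Import ssrcomplements mpoly.
From mathcomp Require Import ring perm.
Set Implicit Arguments. Unset Strict Implicit. Unset Printing Implicit Defensive.
Import GRing.Theory Num.Theory.

Lemma part_nth_le mu a a' : is_partition mu -> (a' <= a)%N -> (a < size mu)%N ->
  (nth 0%N mu a <= nth 0%N mu a')%N.
Proof.
case/andP=> srt _ le lt.
have tr : transitive geq by move=> x y z /= h1 h2; apply: leq_trans h1.
have := @sorted_leq_nth _ geq tr (fun x => leqnn x) 0%N mu srt.
move=> /(_ a' a); rewrite !inE; apply => //.
exact: leq_ltn_trans lt.
Qed.

Lemma cell_down mu a b a' b' : is_partition mu -> cell_in mu (a, b) ->
  (a' <= a)%N -> (b' <= b)%N -> cell_in mu (a', b').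
Proof.
move=> pm /andP [/= ha hb] la lb; apply/andP; split => /=.
  exact: leq_ltn_trans ha.
apply: leq_trans (part_nth_le pm la ha); exact: leq_ltn_trans hb.
Qed.

Lemma cell_head mu c : is_partition mu -> cell_in mu c -> (c.2 < head 0%N mu)%N.
Proof.
move=> pm /andP [ha hb]; apply: leq_trans hb _.
rewrite -nth0; exact: part_nth_le pm (leq0n _) ha.
Qed.

Lemma cells_in mu i j t : is_partition mu -> cell_in mu (i, j) ->
  cell_in mu (nth (0%N, 0%N) (cells mu) t).
Proof.
move=> pm cij; case: (ltnP t (size (cells mu))) => ht.
  by have := mem_nth (0%N, 0%N) ht; rewrite mem_filter => /andP [].
by rewrite nth_default //; apply: cell_down cij _ _.
Qed.

Definition CL (mu : seq nat) : seq (nat * nat) :=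
  [seq (a, b) | a <- iota 0 (size mu), b <- iota 0 (nth 0%N mu a)].

Lemma CL_uniq mu : uniq (CL mu).
Proof.
rewrite /CL; apply: allpairs_uniq_dep; rewrite ?iota_uniq //.
by move=> a _ /=; apply: iota_uniq.
by move=> [a1 b1] [a2 b2] _ _ [-> ->].
Qed.

Lemma CL_size mu : size (CL mu) = sumn mu.
Proof.
rewrite /CL size_allpairs_dep.
rewrite -[in RHS](mkseq_nth 0%N mu) /mkseq.
by congr sumn; apply: eq_map => a /=; rewrite size_iota.
Qed.

Lemma CL_mem mu c : (c \in CL mu) = cell_in mu c.
Proof.
case: c => a b; apply/idP/idP.
  case/allpairsPdep => a' [b' [ha hb [-> ->]]].
  by rewrite /cell_in /=; rewrite !mem_iota /= in ha hb; rewrite ha hb.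
case/andP => /= ha hb; apply/allpairsPdep; exists a, b; split=> //.
by rewrite mem_iota.
by rewrite mem_iota.
Qed.

Lemma inj_cover N mu (cz : 'I_N -> nat * nat) :
  sumn mu = N -> injective cz -> (forall r, cell_in mu (cz r)) ->
  forall c, cell_in mu c -> exists r, cz r = c.
Proof.
move=> sN inj allin c cc.
have sub : {subset [seq cz r | r <- enum 'I_N] <= CL mu}.
  by move=> x /mapP [r _ ->]; rewrite CL_mem.
have un : uniq [seq cz r | r <- enum 'I_N] by rewrite map_inj_uniq ?enum_uniq.
have sz : (size (CL mu) <= size [seq cz r | r <- enum 'I_N])%N.
  by rewrite size_map size_enum_ord CL_size sN.
have [_ /(_ c)] := uniq_min_size un sub sz.
by rewrite CL_mem cc => /mapP [r _ ->]; exists r.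
Qed.

Local Open Scope ring_scope.

Definition lagw (nu : nat -> rat) (p a : nat) : rat :=
  (\prod_(a' < p.+1 | a' != a :> nat) (nu a - nu a'))^-1.

Lemma lagrange_coef (nu : nat -> rat) p (f : {poly rat}) :
  (forall a b, (a < p.+1)%N -> (b < p.+1)%N -> nu a = nu b -> a = b) ->
  (size f <= p.+1)%N ->
  \sum_(a < p.+1) f.[nu a] * lagw nu p a = f`_p.
Proof.
move=> inj sf.
pose L (a : 'I_p.+1) := \prod_(a' < p.+1 | a' != a :> nat) ('X - (nu a')%:P).
pose g := \sum_(a < p.+1) (f.[nu a] * lagw nu p a) *: L a.
have sL a : size (L a) = p.+1.
  rewrite /L -big_filter size_prod_XsubC size_filter.
  rewrite -sum1_count sum1_card.
  rewrite (@eq_card _ _ (predC1 a)) ?cardC1 ?card_ord //.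
have mL a : L a \is monic by apply: monic_prod_XsubC.
have cL a : (L a)`_p = 1.
  by move/monicP: (mL a); rewrite lead_coefE sL.
have hL a (b : 'I_p.+1) : (L a).[nu b] = if a == b then \prod_(a' < p.+1 | a' != a :> nat) (nu a - nu a') else 0.
  rewrite /L horner_prod; case: eqP => [->|/eqP ab].
    by apply: eq_bigr => a' _; rewrite hornerXsubC.
  rewrite (bigD1 b) /= ?hornerXsubC ?subrr ?mul0r //.
  by rewrite eq_sym; apply: contra ab => /eqP/val_inj ->.
have nz (a : 'I_p.+1) : \prod_(a' < p.+1 | a' != a :> nat) (nu a - nu a') != 0.
  apply/prodf_neq0 => a' ne; rewrite subr_eq0; apply/eqP => h.
  have /val_inj e := inj _ _ (ltn_ord a) (ltn_ord a') h.
  by move: ne; rewrite e eqxx.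
have gv (b : 'I_p.+1) : g.[nu b] = f.[nu b].
  rewrite /g horner_sum (bigD1 b) //= big1 ?addr0.
    by rewrite hornerZ hL eqxx /lagw -mulrA mulVf ?mulr1.
  by move=> a ne; rewrite hornerZ hL (negPf ne) mulr0.
have fg : f = g.
  apply/eqP; rewrite -subr_eq0; apply/eqP.
  apply: (@roots_geq_poly_eq0 _ _ [seq nu (val a) | a <- enum 'I_p.+1]).
  - by apply/allP => x /mapP [b _ ->]; rewrite /root hornerD hornerN gv subrr.
  - rewrite map_inj_uniq ?enum_uniq // => a b h.
    by apply/val_inj/(inj _ _ (ltn_ord a) (ltn_ord b) h).
  - rewrite size_map size_enum_ord (leq_trans (size_polyD _ _)) // geq_max sf.
    rewrite size_polyN (leq_trans (size_sum _ _ _)) //.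
    apply/bigmax_leqP => a _; by rewrite (leq_trans (size_scale_leq _ _)) // sL.
rewrite {2}fg /g coef_sum; apply: eq_bigr => a _.
by rewrite coefZ cL mulr1.
Qed.

Definition wt (nu : nat -> rat) (p a : nat) : rat := if (a <= p)%N then lagw nu p a else 0.
Definition newt (nu : nat -> rat) (lo a : nat) : rat := \prod_(a' < lo) (nu a - nu a').

Lemma dd1 (nu : nat -> rat) p lo e B :
  (forall a b, (a < p.+1)%N -> (b < p.+1)%N -> nu a = nu b -> a = b) ->
  (p < B)%N -> (lo + e <= p)%N ->
  \sum_(a < B) wt nu p a * newt nu lo a * nu a ^+ e = ((lo + e)%N == p)%:R.
Proof.
move=> inj pB le.
rewrite (bigID (fun a : 'I_B => (a < p.+1)%N)) /= [X in _ + X]big1 ?addr0; last first.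
  by move=> a; rewrite ltnS /wt => /negPf ->; rewrite !mul0r.
rewrite -(big_ord_widen _ (fun a => wt nu p a * newt nu lo a * nu a ^+ e) pB).
pose f : {poly rat} := (\prod_(a' < lo) ('X - (nu a')%:P)) * 'X^e.
have mf : f \is monic by rewrite /f monicMr ?monicXn // monic_prod_XsubC.
have sf : size f = (lo + e).+1.
  rewrite /f size_monicM ?monic_prod_XsubC //; last by rewrite monic_neq0 ?monicXn.
  by rewrite -big_enum size_prod_XsubC size_enum_ord size_polyXn addnS.
have LC := @lagrange_coef nu p f inj.
rewrite sf ltnS in LC.
have fp : f`_p = ((lo + e)%N == p)%:R.
  case: eqP => [E|ne]; first by move/monicP: mf; rewrite lead_coefE sf -E.
  by apply/nth_default; rewrite sf ltn_neqAle le andbT; apply/eqP.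
rewrite -fp -(LC le).
apply: eq_bigr => a _; rewrite /wt -ltnS ltn_ord mulrC /f hornerM horner_prod hornerXn.
rewrite /newt [in RHS](eq_bigr (fun a' : 'I_lo => nu a - nu a')) => [|a' _]; last by rewrite hornerXsubC.
by ring.
Qed.


Section Lin.
Variable M : nat.
Implicit Types (P Q T : {mpoly rat[M]}) (phi : 'X_{1..M} -> rat).

Definition lin phi P : rat := \sum_(u <- msupp P) P@_u * phi u.

Lemma lin_w phi P b : (msize P <= b)%N ->
  lin phi P = \sum_(u : 'X_{1..M < b}) P@_u * phi u.
Proof.
move=> lt_pk; pose I : subFinType _ := 'X_{1..M < b}.
rewrite /lin (big_mksub I) //=; first last.
  by move=> x /msize_mdeg_lt /leq_trans; apply.
  by rewrite msupp_uniq.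
by rewrite big_rmcond //= => i; move/memN_msupp_eq0 ->; rewrite mul0r.
Qed.

Lemma linD phi P Q : lin phi (P + Q) = lin phi P + lin phi Q.
Proof.
pose b := maxn (msize P) (msize Q).
rewrite !(@lin_w _ _ b) ?leq_maxl ?leq_maxr //; last first.
  exact: leq_trans (msizeD_le _ _) _.
by rewrite -big_split /=; apply: eq_bigr => u _; rewrite mcoeffD mulrDl.
Qed.

Lemma linZ phi c P : lin phi (c *: P) = c * lin phi P.
Proof.
rewrite !(@lin_w _ _ (msize P)) ?msizeZ_le // mulr_sumr.
by apply: eq_bigr => u _; rewrite mcoeffZ mulrA.
Qed.

Lemma lin0 phi : lin phi 0 = 0.
Proof. by rewrite /lin msupp0 big_nil. Qed.

Lemma lin_sum phi (I : Type) (r : seq I) (Pr : pred I) (F : I -> {mpoly rat[M]}) :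
  lin phi (\sum_(x <- r | Pr x) F x) = \sum_(x <- r | Pr x) lin phi (F x).
Proof.
elim: r => [|x r ih]; first by rewrite !big_nil lin0.
by rewrite !big_cons; case: (Pr x); rewrite ?linD ih.
Qed.

Lemma lin_X phi v : lin phi 'X_[v] = phi v.
Proof. by rewrite /lin msuppX big_seq1 mcoeffX eqxx mul1r. Qed.

Lemma lin_MX phi v T : lin phi ('X_[v] * T) = lin (fun u => phi (v + u)%MM) T.
Proof.
rewrite /lin -commr_mpolyX (perm_big _ (msuppMX T v)) big_map.
by apply: eq_bigr => u _; rewrite mcoeffMX.
Qed.

Lemma lin_M phi c T : lin phi (c * T) =
  \sum_(v <- msupp c) c@_v * lin (fun u => phi (v + u)%MM) T.
Proof.
rewrite {1}[c]mpolyE mulr_suml lin_sum; apply: eq_bigr => v _.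
by rewrite -scalerAl linZ lin_MX.
Qed.

Lemma lin_top phi g : lin phi (topcomp g) =
  \sum_(u <- msupp g | mdeg u == (msize g).-1) g@_u * phi u.
Proof.
rewrite /topcomp lin_sum; apply: eq_bigr => u _.
by rewrite linZ lin_X.
Qed.

Definition mfact (E : 'X_{1..M}) : nat := \prod_(i < M) (E i)`!.

Lemma diffop_coef P R e :
  (diffop P R)@_e = \sum_(u <- msupp P) P@_u * (R^`M[u])@_e.
Proof.
rewrite /diffop raddf_sum /=; apply: eq_bigr => u _; by rewrite mcoeffZ.
Qed.

Lemma diffop_zero P (D : {mpoly rat[M]}) (Q : 'X_{1..M}) (C : nat) :
  (forall E, D@_E != 0 -> mfact E = C) ->
  (forall e, lin (fun u => D@_(Q + e + u)%MM) P = 0) ->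
  diffop P (D^`M[Q]) = 0.
Proof.
move=> hC hL; apply/mpolyP => e; rewrite mcoeff0 diffop_coef.
have fe : (mfact e)%:R != 0 :> rat.
  by rewrite pnatr_eq0 -lt0n /mfact prodn_gt0 // => i; rewrite fact_gt0.
apply/eqP; rewrite -(mulIr_eq0 _ (mulIf fe)) mulr_suml.
rewrite (eq_bigr (fun u => P@_u * D@_(Q + e + u)%MM * C%:R)) => [|u _].
  by rewrite -mulr_suml; move: (hL e); rewrite /lin => ->; rewrite mul0r.
rewrite -!mulrA; congr (_ * _).
rewrite !mcoeff_mderivm -mulrnA -[_ *+ (_ * _)%N]mulr_natr -mulrA -natrM.
rewrite [(u + e)%MM]addmC addmA.
have [->|nz] := eqVneq (D@_(Q + e + u)%MM) 0; first by rewrite !mul0r.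
rewrite -(hC _ nz); congr (_ * _%:R).
rewrite /mfact -!big_split /=; apply: eq_bigr => i _.
rewrite !mnmDE -mulnA.
have := ffact_fact (leq_addl (e i) (u i)); rewrite addnK => ->.
rewrite -addnA.
by have := ffact_fact (leq_addr (e i + u i) (Q i)); rewrite addKn => ->.
Qed.

End Lin.


Lemma prod_dd M (x m : 'X_{1..M}) (F : 'I_M -> rat) :
  (mdeg x <= mdeg m)%N ->
  (forall i, (x i <= m i)%N -> F i = (x i == m i)%:R) ->
  \prod_i F i = (x == m)%:R.
Proof.
move=> dg hF; case: (eqVneq x m) => [E|ne].
  by rewrite big1 // => i _; rewrite hF E ?eqxx.
have [i lt] : exists i, (x i < m i)%N.
  apply/existsP; apply: contraR ne; rewrite negb_exists => /forallP h.
  have h' i : (m i <= x i)%N by rewrite leqNgt h.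
  have := @leqif_sum _ xpredT (fun i => m i == x i) (fun i => m i) (fun i => x i).
  case=> [i _|]; first exact/leqif_eq/h'.
  rewrite -!mdegE => le1 /esym; rewrite eqn_leq le1 dg /= => /forallP hh.
  by apply/eqP/mnmP => i; apply/esym/eqP/hh.
by rewrite (bigD1 i) //= hF ?(ltnW lt) // ltn_eqF // mul0r.
Qed.

Lemma dd_mpoly M B (nu : 'I_M -> nat -> rat) (m lo K : 'X_{1..M}) (g : {mpoly rat[M]}) :
  (forall i, (m i < B)%N) ->
  (forall i a b, (a < (m i).+1)%N -> (b < (m i).+1)%N -> nu i a = nu i b -> a = b) ->
  (forall u, u \in msupp g -> (mdeg lo + mdeg K + mdeg u <= mdeg m)%N) ->
  \sum_(z : {ffun 'I_M -> 'I_B})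
     (\prod_i (wt (nu i) (m i) (z i) * newt (nu i) (lo i) (z i) * nu i (z i) ^+ K i))
      * g.@[fun i => nu i (z i)]
  = \sum_(u <- msupp g) g@_u * ((lo + K + u)%MM == m)%:R.
Proof.
move=> mB inj dg.
under eq_bigr => z _ do rewrite mevalE mulr_sumr.
rewrite exchange_big /=; apply: eq_big_seq => u uin.
under eq_bigr => z _ do rewrite mulrCA -big_split /=.
rewrite -mulr_sumr; congr (_ * _).
rewrite -(bigA_distr_bigA (fun i (a : 'I_B) => wt (nu i) (m i) a * newt (nu i) (lo i) a * nu i a ^+ K i * nu i a ^+ u i)).
apply: prod_dd; first by rewrite !mdegD dg.
move=> i le; rewrite !mnmDE.
under eq_bigr => a _ do rewrite -mulrA -exprD.
rewrite dd1 ?addnA //; first exact: inj.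
by rewrite !mnmDE in le.
Qed.


Section Spec.
Variable N : nat.
Variable c : 'I_N -> nat * nat.

Definition mS (s : 'S_N) : 'X_{1..N + N} :=
  [multinom match split ii with inl r => (c (s r)).1 | inr r => (c (s r)).2 end | ii < N + N].

Lemma mS_l s r : mS s (lshift N r) = (c (s r)).1.
Proof. by rewrite mnmE (unsplitK (inl r)). Qed.
Lemma mS_r s r : mS s (rshift N r) = (c (s r)).2.
Proof. by rewrite mnmE (unsplitK (inr r)). Qed.

Lemma bigLR (R : Type) (idx : R) (op : Monoid.com_law idx) (F : 'I_(N + N) -> R) :
  \big[op/idx]_ii F ii = \big[op/idx]_r op (F (lshift N r)) (F (rshift N r)).
Proof. by rewrite big_split_ord big_split. Qed.

Lemma mdeg_mS s : mdeg (mS s) = (\sum_t ((c t).1 + (c t).2))%N.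
Proof.
rewrite mdegE bigLR; under eq_bigr => r _ do rewrite mS_l mS_r.
by rewrite [RHS](reindex_inj (@perm_inj _ s)).
Qed.

Lemma mfact_mS s : mfact (mS s) = (\prod_t ((c t).1`! * (c t).2`!))%N.
Proof.
rewrite /mfact bigLR; under eq_bigr => r _ do rewrite mS_l mS_r.
by rewrite [RHS](reindex_inj (@perm_inj _ s)).
Qed.

Definition Dmat : 'M[{mpoly rat[N + N]}]_N :=
  \matrix_(r < N, t < N) ('X_(lshift N r) ^+ (c t).1 * 'X_(rshift N r) ^+ (c t).2).

Lemma det_expand : \det Dmat = \sum_(s : 'S_N) ((-1) ^+ s : rat) *: 'X_[mS s].
Proof.
rewrite /determinant; apply: eq_bigr => s _.
rewrite mpolyXE_id bigLR.
rewrite [in RHS](eq_bigr (fun r => 'X_(lshift N r) ^+ (c (s r)).1 * 'X_(rshift N r) ^+ (c (s r)).2)); last first.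
  by move=> r _; rewrite mS_l mS_r.
rewrite -mul_mpolyC rmorph_sign; congr (_ * _).
by apply: eq_bigr => r _; rewrite mxE.
Qed.

Lemma coef_det E : (\det Dmat)@_E = \sum_(s : 'S_N) (-1) ^+ s * (mS s == E)%:R.
Proof.
rewrite det_expand raddf_sum; apply: eq_bigr => s _.
by rewrite /= mcoeffZ mcoeffX.
Qed.

End Spec.


Section Main.
Variables (n k : nat) (mu : seq nat) (i j : nat) (alpha beta : nat -> rat).
Variable d : 'I_k -> nat * nat.
Local Notation N := (n + k)%N.
Definition ct (t : 'I_N) := nth (0%N, 0%N) (cells mu) t.
Definition nu (ii : 'I_(N + N)) : nat -> rat := if (ii < N)%N then alpha else beta.
Local Notation lo := (dmon n k d).

Lemma nu_l r : nu (lshift N r) = alpha. Proof. by rewrite /nu /= ltn_ord. Qed.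
Lemma nu_r r : nu (rshift N r) = beta. Proof. by rewrite /nu /= ltnNge leq_addr. Qed.

Lemma lo_ll t : lo (lshift N (lshift k t)) = 0%N.
Proof.
rewrite mnmE /= ltn_addr //; case: ifP => // h.
by move: (ltn_ord t); rewrite ltnNge h.
Qed.

Lemma lo_lr s : lo (lshift N (rshift n s)) = (d s).1.
Proof.
rewrite mnmE /= ltn_add2l ltn_ord leq_addr addKn.
by rewrite (valK s).
Qed.

Lemma lo_rl t : lo (rshift N (lshift k t)) = 0%N.
Proof.
rewrite mnmE /= ltnNge leq_addr /= addKn; case: ifP => // h.
by move: (ltn_ord t); rewrite ltnNge h.
Qed.

Lemma lo_rr s : lo (rshift N (rshift n s)) = (d s).2.
Proof.
rewrite mnmE /= ltnNge leq_addr /= addKn leq_addr addKn.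
by rewrite (valK s).
Qed.

Variable B : nat.
Implicit Type z : {ffun 'I_(N + N) -> 'I_B}.
Definition zx z (r : 'I_N) : nat := z (lshift N r).
Definition zy z (r : 'I_N) : nat := z (rshift N r).
Definition cz z r := (zx z r, zy z r).
Definition M0 z : 'M[rat]_N :=
  \matrix_(r, t) (wt alpha (ct t).1 (zx z r) * wt beta (ct t).2 (zy z r)).
Definition aa z (K : 'X_{1..N + N}) r :=
  newt alpha (lo (lshift N r)) (zx z r) * alpha (zx z r) ^+ K (lshift N r) *
  (newt beta (lo (rshift N r)) (zy z r) * beta (zy z r) ^+ K (rshift N r)).

Lemma factor z (K : 'X_{1..N + N}) :
  \sum_(s : 'S_N) (-1) ^+ s * \prod_ii (wt (nu ii) (mS ct s ii) (z ii) *
        newt (nu ii) (lo ii) (z ii) * nu ii (z ii) ^+ K ii)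
  = (\prod_r aa z K r) * \det (M0 z).
Proof.
rewrite /determinant mulr_sumr; apply: eq_bigr => s _.
rewrite mulrCA; congr (_ * _).
rewrite bigLR -big_split /=; apply: eq_bigr => r _.
rewrite mS_l mS_r nu_l nu_r mxE /aa /zx /zy; ring.
Qed.

Lemma small_eval (g : {mpoly rat[N + N]}) (v1 v2 : 'I_(N + N) -> rat) :
  small n g ->
  (forall ii : 'I_(N + N), (if (ii < N)%N then (ii < n)%N else (ii - N < n)%N) -> v1 ii = v2 ii) ->
  g.@[v1] = g.@[v2].
Proof.
move=> gs hv; rewrite !mevalE; apply: eq_big_seq => m min; congr (_ * _).
apply: eq_bigr => ii _; have [->|nz] := eqVneq (m ii) 0%N; first by rewrite !expr0.
by rewrite hv // (gs m min ii nz).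
Qed.

Lemma newt0 (nu0 : nat -> rat) l a : (a < l)%N -> newt nu0 l a = 0.
Proof.
by move=> al; rewrite /newt (bigD1 (Ordinal al)) //= subrr mul0r.
Qed.

Lemma wt0 (nu0 : nat -> rat) p a : (p < a)%N -> wt nu0 p a = 0.
Proof. by rewrite /wt ltnNge => /negPf ->. Qed.

Hypothesis pm : is_partition mu.
Hypothesis sN : sumn mu = N.
Hypothesis cij : cell_in mu (i, j).
Hypothesis dsh : forall s, shadow mu i j (d s).

Lemma vanish (g : {mpoly rat[N + N]}) z (K : 'X_{1..N + N}) :
  small n g ->
  (forall f, is_filling n k mu i j f -> g.@[fpoint n alpha beta f] = 0) ->
  g.@[fun ii => nu ii (z ii)] * ((\prod_r aa z K r) * \det (M0 z)) = 0.
Proof.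
move=> gs gJ.
case: (boolP [exists r, ~~ cell_in mu (cz z r)]) => [/existsP [r nr]|hA].
  suff -> : \det (M0 z) = 0 by rewrite !mulr0.
  rewrite (expand_det_row _ r) big1 // => t _; rewrite mxE.
  case: (leqP (zx z r) (ct t).1) => l1; last by rewrite wt0 // !mul0r.
  case: (leqP (zy z r) (ct t).2) => l2; last by rewrite (wt0 _ l2) mulr0 mul0r.
  case/negP: nr; apply: (cell_down pm _ l1 l2).
  by move: (cells_in t pm cij); rewrite /ct; case: nth.
case: (boolP [exists r1, exists r2, (r1 != r2) && (cz z r1 == cz z r2)]) => [|hB].
  case/existsP => r1 /existsP [r2 /andP [ne /eqP e]].
  suff -> : \det (M0 z) = 0 by rewrite !mulr0.
  apply: (determinant_alternate ne) => t.
  by rewrite !mxE; case: e => -> ->.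
(* case C: some white cell not above d s *)
case: (boolP [exists s, ~~ (((d s).1 <= zx z (rshift n s))%N && ((d s).2 <= zy z (rshift n s))%N)]) => [|hC].
  case/existsP => s; rewrite negb_and -!ltnNge => h.
  rewrite (bigD1 (rshift n s)) //= {1}/aa lo_lr lo_rr.
  by case/orP: h => h; rewrite (newt0 _ h) ?(mul0r, mulr0).
have inA r : cell_in mu (cz z r).
  by apply/negPn; move: hA; rewrite negb_exists => /forallP /(_ r).
have inj : injective (cz z).
  move=> r1 r2 e; apply/eqP; apply: contraR hB => ne; apply/existsP; exists r1.
  by apply/existsP; exists r2; rewrite ne e eqxx.
have hd s : ((d s).1 <= zx z (rshift n s))%N && ((d s).2 <= zy z (rshift n s))%N.
  by apply/negPn; move: hC; rewrite negb_exists => /forallP /(_ s).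
pose f (t : nat) := odflt (0%N, 0%N) (omap (cz z) (insub t : option 'I_N)).
have fE (t0 : 'I_n) : f t0 = cz z (lshift k t0).
  rewrite /f (insubT (fun x => x < N)%N (ltn_addr k (ltn_ord t0))) /=.
  by congr (cz z _); apply: val_inj.
pose W := [seq cz z (rshift n s) | s <- enum 'I_k].
have fill : is_filling n k mu i j f.
  exists W; split.
  - split.
    + by rewrite map_inj_uniq ?enum_uniq // => s1 s2 /inj /rshift_inj.
    + by rewrite size_map size_enum_ord.
    + apply/allP => x /mapP [s _ ->]; have := dsh s; have := hd s.
      case/andP => h1 h2 /and3P [_ /= h3 h4]; apply/and3P; split => //.
      exact: leq_trans h3 h1.
      exact: leq_trans h4 h2.
  - move=> t tn; have := fE (Ordinal tn); rewrite /= => ->; split => //.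
    by apply/mapP => -[s _ /inj] /eqP; rewrite eq_lrshift.
  - move=> t u tn un; rewrite (fE (Ordinal tn)) (fE (Ordinal un)).
    by move/inj/lshift_inj => [].
  - move=> x xin xW; have [r er] := inj_cover sN inj inA xin.
    case: (splitP r) => [t0 et|s0 es].
      exists (val t0); first exact: ltn_ord.
      by rewrite fE -er; congr (cz z _); apply: val_inj.
    case/mapP: xW; exists s0; first by rewrite mem_enum.
    by rewrite -er; congr (cz z _); apply: val_inj.
have := gJ f fill; rewrite (@small_eval g _ (fun ii => nu ii (z ii))) //.
  by move=> ->; rewrite mul0r.
move=> ii; rewrite /fpoint /nu; case: ifP => iN iin.
  rewrite iin; have -> : f ii = cz z (lshift k (Ordinal iin)) by rewrite -fE.
  by rewrite /cz /zx /=; congr (alpha (val (z _))); apply: val_inj.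
rewrite iin; have -> : f (ii - N)%N = cz z (lshift k (Ordinal iin)) by rewrite -fE.
rewrite /cz /zy /=; congr (beta (val (z _))); apply: val_inj => /=.
by rewrite subnKC // leqNgt iN.
Qed.
End Main.


Section Small.
Variables (n N : nat).
Implicit Types (p q : {mpoly rat[N + N]}).

Lemma small_sub p q : {subset msupp p <= msupp q} -> small n q -> small n p.
Proof. by move=> sub sq m /sub; apply: sq. Qed.

Lemma small_sum (I : Type) (r : seq I) (F : I -> {mpoly rat[N + N]}) :
  (forall x, small n (F x)) -> small n (\sum_(x <- r) F x).
Proof.
move=> h; elim: r => [|x r ih]; first by rewrite big_nil => m; rewrite msupp0.
rewrite big_cons => m /msuppD_le; rewrite mem_cat => /orP [/h{}h|/ih{}h] //.
Qed.

Lemma small_mul p q : small n p -> small n q -> small n (p * q).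
Proof.
move=> sp sq m /msuppM_le /allpairsP [[m1 m2] [/= h1 h2 ->]] ii.
rewrite mnmDE; case: (eqVneq (m1 ii) 0%N) => [->|nz1] /= nz.
  exact: sq h2 ii nz.
exact: sp h1 ii nz1.
Qed.

Lemma small_top (g : {mpoly rat[N + N]}) : small n g -> small n (topcomp g).
Proof.
move=> sg; rewrite /topcomp.
have : {subset msupp g <= msupp g} by [].
elim: {-2}(msupp g) => [|x r ih] sub; first by rewrite big_nil => m; rewrite msupp0.
rewrite big_cons; case: ifP => _; last by apply: ih => y yr; apply: sub; rewrite inE yr orbT.
move=> m /msuppD_le; rewrite mem_cat => /orP [|/ih{}h]; last first.
  by apply: h => y yr; apply: sub; rewrite inE yr orbT.
move=> /msuppZ_le; rewrite msuppX inE => /eqP ->; apply: sg.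
by apply: sub; rewrite inE eqxx.
Qed.
End Small.

Section Final.
Variables (n k : nat) (mu : seq nat) (i j : nat) (alpha beta : nat -> rat).
Local Notation N := (n + k)%N.
Hypothesis pm : is_partition mu.
Hypothesis sN : sumn mu = N.
Hypothesis cij : cell_in mu (i, j).
Hypothesis ainj : forall a b, (a < size mu)%N -> (b < size mu)%N -> alpha a = alpha b -> a = b.
Hypothesis binj : forall a b, (a < head 0%N mu)%N -> (b < head 0%N mu)%N -> beta a = beta b -> a = b.
Variable d : 'I_k -> nat * nat.
Hypothesis dsh : forall s, shadow mu i j (d s).
Local Notation lo := (dmon n k d).
Local Notation c := (@ct n k mu).
Local Notation Dl := (Delta N mu).
Definition Dc := (\sum_(t < N) ((c t).1 + (c t).2))%N.
Definition Cc := (\prod_(t < N) ((c t).1`! * (c t).2`!))%N.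

Lemma DlE : Dl = \det (Dmat c).
Proof. by []. Qed.

Lemma coef_zero E : mdeg E != Dc -> Dl@_E = 0.
Proof.
move=> ne; rewrite DlE coef_det big1 // => s _.
case: eqP => [e|]; last by rewrite mulr0.
by move: ne; rewrite -e mdeg_mS eqxx.
Qed.

Lemma coef_fact E : Dl@_E != 0 -> mfact E = Cc.
Proof.
rewrite DlE coef_det => nz.
have [s _ ] : exists2 s : 'S_N, true & mS c s == E.
  apply/exists_inP; apply: contraR nz; rewrite negb_exists_in => /forall_inP h.
  by rewrite big1 // => s _; rewrite (negPf (h s isT)) mulr0.
by move/eqP <-; rewrite mfact_mS.
Qed.

Local Notation B := (size mu + head 0%N mu)%N.

Lemma c_bounds t : ((c t).1 < size mu)%N /\ ((c t).2 < head 0%N mu)%N.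
Proof.
have := cells_in t pm cij; rewrite /ct; case: nth => a b h.
split; first by case/andP: h.
exact: (cell_head pm h).
Qed.

Lemma mS_hyps (s : 'S_N) :
  (forall ii, (mS c s ii < B)%N) /\
  (forall ii a b, (a < (mS c s ii).+1)%N -> (b < (mS c s ii).+1)%N ->
     nu alpha beta ii a = nu alpha beta ii b -> a = b).
Proof.
have key ii : exists r : 'I_N, (ii = lshift N r) \/ (ii = rshift N r).
  case: (splitP ii) => [r e|r e]; exists r; [left|right]; exact: val_inj.
split.
  move=> ii; have [r [->|->]] := key ii; rewrite ?mS_l ?mS_r; have [h1 h2] := c_bounds (s r).
    exact: ltn_addr.
  exact: ltn_addl.
move=> ii a b; have [r [->|->]] := key ii; rewrite ?mS_l ?mS_r ?nu_l ?nu_r;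
  have [h1 h2] := c_bounds (s r) => ha hb.
  by apply: ainj; apply: leq_trans h1.
by apply: binj; apply: leq_trans h2.
Qed.

Lemma core (g : {mpoly rat[N + N]}) (K : 'X_{1..N + N}) :
  in_J n k mu i j alpha beta g ->
  (forall u, u \in msupp g -> (mdeg lo + mdeg K + mdeg u <= Dc)%N) ->
  \sum_(u <- msupp g) g@_u * Dl@_(lo + K + u)%MM = 0.
Proof.
case=> gs gJ hdeg.
under eq_bigr => u _ do rewrite DlE coef_det mulr_sumr.
rewrite exchange_big /=.
have step (s : 'S_N) : \sum_(u <- msupp g) g@_u * ((-1) ^+ s * (mS c s == (lo + K + u)%MM)%:R)
   = (-1) ^+ s * \sum_(z : {ffun 'I_(N + N) -> 'I_B})
     (\prod_ii (wt (nu alpha beta ii) (mS c s ii) (z ii) * newt (nu alpha beta ii) (lo ii) (z ii) *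
                nu alpha beta ii (z ii) ^+ K ii)) * g.@[fun ii => nu alpha beta ii (z ii)].
  have [h1 h2] := mS_hyps s.
  rewrite (dd_mpoly h1 h2) ?mdeg_mS // mulr_sumr; apply: eq_bigr => u _.
  by rewrite eq_sym mulrCA.
under eq_bigr => s _ do rewrite step mulr_sumr.
rewrite exchange_big /= big1 // => z _.
apply: etrans (@vanish n k mu i j alpha beta d B pm sN cij dsh g z K gs gJ).
rewrite -factor mulr_sumr; apply: eq_bigr => s _.
by rewrite [X in _ * X]mulrC mulrCA.
Qed.

Lemma lin_ext M (phi psi : 'X_{1..M} -> rat) P : phi =1 psi -> lin phi P = lin psi P.
Proof. by move=> h; rewrite /lin; apply: eq_bigr => u _; rewrite h. Qed.

Lemma KT (g : {mpoly rat[N + N]}) (K : 'X_{1..N + N}) :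
  in_J n k mu i j alpha beta g ->
  lin (fun u => Dl@_(lo + K + u)%MM) (topcomp g) = 0.
Proof.
move=> gJ; rewrite lin_top.
have hu u : u \in msupp g -> (mdeg u <= (msize g).-1)%N.
  move=> uin; have h := msize_mdeg_lt uin.
  by rewrite -ltnS prednK // (leq_ltn_trans (leq0n _) h).
case: (eqVneq (mdeg lo + mdeg K + (msize g).-1)%N Dc) => [e|ne].
  transitivity (\sum_(u <- msupp g) g@_u * Dl@_(lo + K + u)%MM); last first.
    apply: core => // u uin; rewrite -e leq_add2l; exact: hu.
  rewrite [LHS]big_mkcond /=; apply: eq_big_seq => u uin; case: ifP => // /negbT ne'.
  rewrite coef_zero ?mulr0 //; rewrite !mdegD -e; apply/eqP => e2.
  move: (hu u uin); rewrite leq_eqVlt (negPf ne') /= => lt.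
  by move: e2 => /eqP; rewrite eqn_add2l => /eqP e3; move: lt; rewrite e3 ltnn.
rewrite big1_seq // => u /andP [/eqP eu _].
by rewrite coef_zero ?mulr0 // !mdegD eu.
Qed.

Lemma KL (P : {mpoly rat[N + N]}) (K : 'X_{1..N + N}) :
  in_Ik n k mu i j alpha beta P ->
  lin (fun u => Dl@_(lo + K + u)%MM) P = 0.
Proof.
case=> p [cs [gs [hc hg ->]]]; rewrite lin_sum big1 // => s _.
rewrite lin_M big1_seq // => v _.
rewrite (@lin_ext _ _ (fun u => Dl@_(lo + (K + v) + u)%MM)) ?KT ?mulr0 //.
by move=> u /=; rewrite !addmA.
Qed.
End Final.

Unset Implicit Arguments.

Theorem mainTheorem5 (n k : nat) (mu : seq nat) (i j : nat) (alpha beta : nat -> rat) :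
  is_partition mu ->
  sumn mu = (n + k)%N ->
  cell_in mu (i, j) ->
  (forall a b, (a < size mu)%N -> (b < size mu)%N -> alpha a = alpha b -> a = b) ->
  (forall a b, (a < head 0%N mu)%N -> (b < head 0%N mu)%N -> beta a = beta b -> a = b) ->
  forall P : {mpoly rat[(n + k) + (n + k)]},
    in_Ik n k mu i j alpha beta P ->
    small n P /\
    (forall d : 'I_k -> nat * nat,
       (forall s, shadow mu i j (d s)) ->
       (forall s t : 'I_k, (s < t)%N -> cell_lt (d s) (d t)) ->
       in_IR (mderivm (dmon n k d) (Delta (n + k) mu)) P).
Proof.
move=> pm sN cij ainj binj P hP; split.
  case: hP => p [cs [gs [hc hg ->]]].
  apply: small_sum => s; apply: small_mul; first exact: hc.
  by apply: small_top; case: (hg s).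
move=> d dsh _ m; rewrite -mderivmDm.
apply: diffop_zero.
  by move=> E; apply: coef_fact.
move=> e; rewrite -addmA.
by apply: (KL (i:=i) (j:=j) (alpha:=alpha) (beta:=beta)).
Qed.
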